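(* Consider the following slotted system. There are $N\ge 2$ users and slots $t=1,\dots,T$. In every slot, independently, the BS schedules one user chosen uniformly at random among the $N$ users. An adversary uses a blocking matrix $\sigma\in\{0,1\}^{N\times T}$, where $\sigma_i(t)=0$ means user $i$'s channel is blocked in slot $t$. Feasibility means $\sum_{i,t}(1-\sigma_i(t))\le\alpha T$ and at most one user is blocked per slot, where $0<\alpha<1$ and $\alpha T\in\mathbb{Z}$. The ages satisfy $a_i(1)=1$ and $a_i(t+1)=1$ if user $i$ is scheduled in slot $t$ and $\sigma_i(t)=1$, and $a_i(t+1)=a_i(t)+1$ otherwise. The average age is $\Delta^{\sigma}=\frac{1}{T}\sum_{t=1}^T\frac1N\sum_{i=1}^N\mathbb{E}[a_i(t)]$. Then for every feasible $\sigma$, $\Delta^{\sigma}\le \frac{T+1}{2N}+(N-1)$.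
   Context: The expectation is over the random scheduling. *)

(* Defs.v *)
From HB Require Import structures.
From mathcomp Require Import all_boot all_order all_algebra.
Set Implicit Arguments. Unset Strict Implicit. Unset Printing Implicit Defensive.
Import Order.TTheory GRing.Theory Num.Theory.

(* Slots are 0-indexed: slot t (paper) corresponds to k : 'I_T with k = t-1.
   A schedule is s : {ffun 'I_T -> 'I_N} (user scheduled in each slot);
   the blocking matrix is sigma : 'I_N -> 'I_T -> bool (false = blocked).
   age s sigma i t = a_i(t+1) in the paper's 1-indexed notation. *)
Fixpoint age (N T : nat) (s : {ffun 'I_T -> 'I_N}) (sigma : 'I_N -> 'I_T -> bool)
    (i : 'I_N) (t : nat) : nat :=
  match t with
  | 0 => 1
  | t'.+1 =>
      if insub t' is Some k then
        (if (s k == i) && sigma i k then 1 else (age s sigma i t').+1)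
      else (age s sigma i t').+1
  end.

Local Open Scope ring_scope.

(* Expectation over the uniformly random schedule (each slot independent,
   uniform over N users): average over all N^T schedules. *)
Definition exp_age (R : realFieldType) (N T : nat) (sigma : 'I_N -> 'I_T -> bool)
    (i : 'I_N) (t : nat) : R :=
  (\sum_(s : {ffun 'I_T -> 'I_N}) ((age s sigma i t)%:R : R))
    / (#|{ffun 'I_T -> 'I_N}|)%:R.

Definition avg_age (R : realFieldType) (N T : nat) (sigma : 'I_N -> 'I_T -> bool) : R :=
  (T%:R)^-1 * \sum_(t < T) ((N%:R)^-1 * \sum_(i < N) exp_age R sigma i t).

Definition feasible (R : realFieldType) (N T : nat) (alpha : R)
    (sigma : 'I_N -> 'I_T -> bool) : Prop :=
  ((\sum_(i < N) \sum_(t < T) (1 - (sigma i t : nat)))%N%:R <= alpha * T%:R)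
  /\ (forall t : 'I_T, (#|[set i : 'I_N | ~~ sigma i t]| <= 1)%N).

(* Main.v *)
Require Import Defs.
From HB Require Import structures.
From mathcomp Require Import all_boot all_order all_algebra.
From mathcomp Require Import fingroup perm.
From mathcomp Require Import lra ring.
Import Order.TTheory GRing.Theory Num.Theory.
Local Open Scope ring_scope.

Section Aux.
Variables (N T : nat) (sigma : 'I_N -> 'I_T -> bool).
Local Notation F := {ffun 'I_T -> 'I_N}.

Lemma age_local (s s' : F) i t :
  (forall u : 'I_T, (u < t)%N -> s u = s' u) ->
  age s sigma i t = age s' sigma i t.
Proof.
elim: t => //= t IH H.
rewrite IH; last by move=> u hu; apply: H; apply: ltnW.
case: insubP => [k _ kv|_] //.
by rewrite H // kv.
Qed.

Lemma age_le (s : F) i t : (age s sigma i t <= t.+1)%N.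
Proof.
elim: t => //= t IH.
by case: insubP => [k _ _|_] //; case: ifP.
Qed.

Lemma age_succ (s : F) i (k : 'I_T) :
  age s sigma i (val k).+1 =
  if (s k == i) && sigma i k then 1%N else (age s sigma i (val k)).+1.
Proof. by rewrite /= valK. Qed.

Variable R : realFieldType.

Lemma sum_neq (k : 'I_T) (i : 'I_N) (f : F -> R)
  (hf : forall s s' : F, (forall u, u != k -> s u = s' u) -> f s = f s') :
  (0 < N)%N ->
  \sum_(s : F | s k != i) f s = (N%:R - 1) / N%:R * \sum_(s : F) f s.
Proof.
move=> N0.
have Hc : forall x, \sum_(s : F | s k == x) f s = \sum_(s : F | s k == i) f s.
  move=> x.
  pose g (s : F) : F := [ffun u => if u == k then tperm x i (s u) else s u].
  have ginv : involutive g.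
    move=> s; apply/ffunP => u; rewrite !ffunE.
    by case: eqP => // _; rewrite tpermK.
  rewrite (reindex_inj (inv_inj ginv)).
  apply: eq_big => s.
    rewrite ffunE eqxx.
    by rewrite -[X in _ == X](tpermR x i) (inj_eq (@perm_inj _ _)).
  move=> _; apply: hf => u hu; by rewrite ffunE (negbTE hu).
have Htot : \sum_(s : F) f s = N%:R * \sum_(s : F | s k == i) f s.
  rewrite (partition_big (fun s : F => s k) predT) //=.
  rewrite (eq_bigr (fun _ => \sum_(s : F | s k == i) f s)); last first.
    by move=> x _; rewrite -(Hc x).
  by rewrite sumr_const card_ord mulr_natl.
have Hsplit : \sum_(s : F) f s = \sum_(s : F | s k == i) f s + \sum_(s : F | s k != i) f s.
  by rewrite (bigID (fun s : F => s k == i)) /=.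
have -> : \sum_(s : F | s k != i) f s = N%:R * \sum_(s : F | s k == i) f s - \sum_(s : F | s k == i) f s.
  by rewrite -Htot Hsplit addrAC subrr add0r.
rewrite Htot.
have NZ : (N%:R : R) != 0 by rewrite pnatr_eq0 -lt0n.
by field.
Qed.

Definition A (i : 'I_N) (t : nat) : R := \sum_(s : F) ((age s sigma i t)%:R : R).
Definition M : R := (#|F|)%:R.

Lemma A_succ (i : 'I_N) (k : 'I_T) : (0 < N)%N ->
  A i (val k).+1 = M + (if sigma i k then (N%:R - 1) / N%:R else 1) * A i (val k).
Proof.
move=> N0; rewrite /A.
under eq_bigr do rewrite age_succ.
have E : forall s : F, ((if (s k == i) && sigma i k then 1%N else (age s sigma i (val k)).+1)%:R : R)
   = 1 + (if (s k != i) || ~~ sigma i k then (age s sigma i (val k))%:R else 0).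
  move=> s; case: (s k == i); case: (sigma i k) => /=;
    by rewrite ?addr0 // -natr1 addrC.
under eq_bigr do rewrite E.
rewrite big_split /= sumr_const /M.
congr (_ + _).
case: (sigma i k).
  under eq_bigr do rewrite orbF.
  rewrite -big_mkcond /=.
  apply: sum_neq => // s s' H.
  congr (_%:R); apply: age_local => u hu; apply: H.
  by rewrite -val_eqE neq_ltn hu.
under eq_bigr do rewrite orbT.
by rewrite mul1r.
Qed.

Lemma A_ge0 i t : 0 <= A i t.
Proof. by apply: sumr_ge0 => s _; apply: ler0n. Qed.

Lemma A_le i t : A i t <= M * (t.+1)%:R.
Proof.
rewrite /A /M.
apply: (le_trans (y := \sum_(s : F) ((t.+1)%:R : R))).
  by apply: ler_sum => s _; rewrite ler_nat; exact: age_le.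
by rewrite sumr_const mulr_natl.
Qed.

Lemma A0 i : A i 0 = M.
Proof. by rewrite /A /M sumr_const. Qed.

Lemma M_ge0 : 0 <= M.
Proof. exact: ler0n. Qed.

Lemma invariant : (0 < N)%N ->
  (forall t : 'I_T, (#|[set i : 'I_N | ~~ sigma i t]| <= 1)%N) ->
  forall t, (t <= T)%N ->
  \sum_(i < N) A i t <= M * ((t.+1)%:R + N%:R * (N%:R - 1)).
Proof.
move=> N0 hB; elim=> [_|t IH ht].
  under eq_bigr do rewrite A0.
  rewrite sumr_const card_ord -mulr_natr.
  have h1 : (1 <= N%:R :> R) by rewrite ler1n.
  have hM := M_ge0.
  have hp : 0 <= M * ((N%:R - 1) * (N%:R - 1)) by rewrite mulr_ge0 // mulr_ge0 // subr_ge0.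
  rewrite /= (_ : 1%:R = 1) //.
  nra.
have ltT : (t < T)%N by [].
pose k := Ordinal ltT.
have -> : t.+1 = (val k).+1 by [].
under eq_bigr do rewrite A_succ //.
set q := (N%:R - 1) / N%:R.
have NZ : (N%:R : R) != 0 by rewrite pnatr_eq0 -lt0n.
have hq : q * N%:R = N%:R - 1 by rewrite /q; field.
have h1 : (1 <= N%:R :> R) by rewrite ler1n.
have q0 : 0 <= q by rewrite /q divr_ge0 // subr_ge0.
have q1 : q <= 1 by rewrite /q ler_pdivrMr ?mul1r ?gerBl // (lt_le_trans ltr01 h1).
have E : forall i, M + (if sigma i k then q else 1) * A i (val k) =
   M + q * A i (val k) + (1 - q) * (if sigma i k then 0 else A i (val k)).
  by move=> i; case: (sigma i k) => /=; rewrite ?mulr0 ?addr0 ?mul1r //; ring.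
under eq_bigr do rewrite E.
rewrite !big_split /= sumr_const card_ord -!mulr_sumr.
set S := \sum_(i < N) A i (val k).
set X := \sum_(i < N) (if sigma i k then 0 else A i (val k)).
have hX : X <= M * (t.+1)%:R.
  apply: (le_trans (y := \sum_(i < N) (if ~~ sigma i k then M * (t.+1)%:R else 0))).
    apply: ler_sum => i _; case: (sigma i k) => //=; exact: A_le.
  rewrite -big_mkcond /= sumr_const.
  have hb := hB k; rewrite cardsE in hb.
  move: hb; case: #|_| => [|[|n]] //= _; first by rewrite mulr_ge0 // ler0n.
have hS : S <= M * ((t.+1)%:R + N%:R * (N%:R - 1)) by apply: IH; apply: ltnW.
have hM := M_ge0.
have p1 : q * S <= q * (M * ((t.+1)%:R + N%:R * (N%:R - 1))) by apply: ler_wpM2l.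
have p2 : (1 - q) * X <= (1 - q) * (M * (t.+1)%:R).
  apply: ler_wpM2l; [by rewrite subr_ge0 | exact: hX].
have p3 : q * (M * (N%:R * (N%:R - 1))) = M * ((N%:R - 1) * (N%:R - 1)).
  by rewrite /q; field.
rewrite -mulr_natr.
have -> : ((t.+2)%:R : R) = (t.+1)%:R + 1 by rewrite -natr1.
nra.
Qed.

End Aux.

Lemma sum_succ (R : realFieldType) (T : nat) :
  2 * \sum_(t < T) ((t.+1)%:R : R) = T%:R * (T%:R + 1).
Proof.
elim: T => [|T IH]; first by rewrite big_ord0 mulr0 mul0r.
rewrite big_ord_recr /= mulrDr IH -natr1; ring.
Qed.

Theorem theorem2 (R : realFieldType) (N T : nat) (alpha : R)
    (hN : (2 <= N)%N) (hT : (0 < T)%N)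
    (ha0 : 0 < alpha) (ha1 : alpha < 1)
    (haT : exists k : nat, alpha * T%:R = k%:R)
    (sigma : 'I_N -> 'I_T -> bool) :
  feasible alpha sigma ->
  avg_age R sigma <= (T%:R + 1) / (2 * N%:R) + (N%:R - 1).
Proof.
move=> [_ hB].
have N0 : (0 < N)%N by apply: leq_trans hN.
have NZ : (N%:R : R) != 0 by rewrite pnatr_eq0 -lt0n.
have TZ : (T%:R : R) != 0 by rewrite pnatr_eq0 -lt0n.
have Npos : (0 : R) < N%:R by rewrite ltr0n.
have Tpos : (0 : R) < T%:R by rewrite ltr0n.
have Mpos : 0 < M N T R.
  by rewrite /M ltr0n card_ffun card_ord expn_gt0 N0.
rewrite /avg_age.
apply: (le_trans (y := (T%:R)^-1 * \sum_(t < T) ((N%:R)^-1 *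
     ((t.+1)%:R + N%:R * (N%:R - 1))))).
  apply: ler_wpM2l; first by rewrite invr_ge0 ltW.
  apply: ler_sum => t _.
  apply: ler_wpM2l; first by rewrite invr_ge0 ltW.
  rewrite /exp_age -mulr_suml ler_pdivrMr // mulrC.
  exact: (@invariant N T sigma R N0 hB t (ltnW (ltn_ord t))).
rewrite -mulr_sumr big_split /= sumr_const card_ord.
have hs := sum_succ R T.
set Ss := \sum_(t < T) _ in hs *.
rewrite -mulr_natr.
have -> : Ss = T%:R * (T%:R + 1) / 2 by rewrite -hs; field.
rewrite le_eqVlt; apply/orP; left; apply/eqP; field.
by rewrite NZ TZ.
Qed.
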